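(* For every integer $n\ge0$ and real $x$, $$\mathfrak{C}_{n+1}(x)=x\sum_{k=0}^{\lfloor n/2\rfloor}4^{-k}\binom{n+1}{2k+1}\mathfrak{C}_{n-2k}(x).$$
   Context: For $n\ge1$ the central factorial is $x^{[n]}=x\,(x+\tfrac n2-1)(x+\tfrac n2-2)\cdots(x-\tfrac n2+1)$ (a product of $n$ factors), and $x^{[0]}=1$. The central factorial numbers of the second kind $T(n,k)$ ($0\le k\le n$) are defined by $x^n=\sum_{k=0}^n T(n,k)\,x^{[k]}$; equivalently $T(n,k)=\frac1{k!}\sum_{j=0}^k(-1)^j\binom kj\left(\frac k2-j\right)^n$, and $T(n,k)=0$ for $k>n$. The $n$th central Fubini-like polynomial is $\mathfrak{C}_n(x)=\sum_{k=0}^n k!\,T(n,k)\,x^k$. *)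

(* Defs.v *)
From HB Require Import structures.
From mathcomp Require Import all_boot all_order all_algebra.
Set Implicit Arguments. Unset Strict Implicit. Unset Printing Implicit Defensive.
Import Order.TTheory GRing.Theory Num.Theory.
Local Open Scope ring_scope.

(* Central factorial numbers of the second kind:
   T(n,k) = 1/k! * sum_{j=0}^k (-1)^j C(k,j) (k/2 - j)^n. *)
Definition cfT (R : realFieldType) (n k : nat) : R :=
  (k`!%:R)^-1 * \sum_(j < k.+1)
     (-1) ^+ j * ('C(k, j))%:R * (k%:R / 2 - j%:R) ^+ n.

(* Central Fubini-like polynomial C_n(x) = sum_{k=0}^n k! T(n,k) x^k. *)
Definition cfub (R : realFieldType) (n : nat) (x : R) : R :=
  \sum_(k < n.+1) (k`!)%:R * cfT R n k * x ^+ k.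
Arguments cfT : clear implicits.
Arguments cfub : clear implicits.

(* Main.v *)
Require Import Defs.
From HB Require Import structures.
From mathcomp Require Import all_boot all_order all_algebra.
From mathcomp Require Import ring zify.
Import Order.TTheory GRing.Theory Num.Theory.
Local Open Scope ring_scope.

Section S.
Variable R : realFieldType.

Definition D (m : nat) (f : R -> R) : R :=
  \sum_(j < m.+1) (-1) ^+ j * ('C(m, j))%:R * f (m%:R / 2 - j%:R).

Definition a (p m : nat) : R := D m (fun y => y ^+ p).

Lemma D_ext m f g : (forall y, f y = g y) -> D m f = D m g.
Proof. by move=> fg; apply: eq_bigr => j _; rewrite fg. Qed.

Lemma D_lin m K (c : nat -> R) (h : nat -> R -> R) :
  D m (fun y => \sum_(k < K) c k * h k y) = \sum_(k < K) c k * D m (h k).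
Proof.
rewrite /D (eq_bigr (fun j : 'I_m.+1 => \sum_(k < K)
   c k * ((-1) ^+ j * ('C(m, j))%:R * h k (m%:R / 2 - j%:R)))); last first.
  by move=> j _; rewrite mulr_sumr; apply: eq_bigr => k _; ring.
rewrite exchange_big /=; apply: eq_bigr => k _; rewrite mulr_sumr //.
Qed.

Lemma D_step m f :
  D m.+1 f = D m (fun y => f (y + 1/2) - f (y - 1/2)).
Proof.
set g := fun j : nat => f (m.+1%:R / 2 - j%:R).
set G := fun j : nat => (-1) ^+ j * ('C(m, j))%:R * g j.
have H1 : \sum_(j < m.+2) G j = \sum_(j < m.+1) G j.
  by rewrite big_ord_recr /= /G bin_small // mulr0 mul0r addr0.
have H2 : \sum_(j < m.+2) G j = G 0%N + \sum_(j < m.+1) G j.+1.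
  by rewrite big_ord_recl.
rewrite /D big_ord_recl /=.
transitivity (G 0%N + \sum_(j < m.+1) G j.+1 +
   \sum_(j < m.+1) - ((-1) ^+ j * ('C(m, j))%:R * g j.+1)).
  rewrite -addrA -big_split /=; congr (_ + _).
    by rewrite /G /g !bin0 subr0.
  apply: eq_bigr => j _; rewrite binS natrD /G /g exprS /=; ring.
rewrite -H2 H1 -big_split; apply: eq_bigr => j _; rewrite /G /g.
have -> : m%:R / 2 - j%:R + 1 / 2 = (m.+1%:R / 2 - j%:R :> R).
  by rewrite -addn1 natrD; field.
have -> : m%:R / 2 - j%:R - 1 / 2 = (m.+1%:R / 2 - j.+1%:R :> R).
  by rewrite -addn1 natrD -(addn1 j) natrD; field.
rewrite /=; ring.
Qed.


Lemma sum_pairs (F : nat -> R) K :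
  \sum_(i < (2 * K)%N) F i = \sum_(k < K) (F (2 * k)%N + F (2 * k).+1).
Proof.
elim: K => [|K IH]; first by rewrite !big_ord0.
have -> : (2 * K.+1 = (2 * K).+2)%N by rewrite mulnS.
by rewrite !big_ord_recr /= IH addrA.
Qed.

Lemma widen (F : nat -> R) N M : (N <= M)%N -> (forall i, (N <= i)%N -> F i = 0) ->
  \sum_(i < M) F i = \sum_(i < N) F i.
Proof.
move=> NM FN; rewrite -!(big_mkord xpredT) (@big_cat_nat _ _ _ N 0 M _ _ (leq0n N) NM) /=.
rewrite [X in _ + X]big_nat_cond [X in _ + X]big1 ?addr0 // => i /andP[/andP[Hi _] _].
exact: FN.
Qed.

Lemma m1sq : (-1 : R) ^+ 2 = 1.
Proof. by rewrite sqrrN expr1n. Qed.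

Lemma diffpow n (y : R) : (y + 1/2) ^+ n.+1 - (y - 1/2) ^+ n.+1 =
  \sum_(k < (n./2).+1) ((4 : R) ^+ k)^-1 * ('C(n.+1, (2 * k).+1))%:R * y ^+ (n - 2 * k).
Proof.
set F := fun i : nat => ('C(n.+1, i))%:R * y ^+ (n.+1 - i) * ((1/2 : R) ^+ i - (- (1/2)) ^+ i).
have Fe : forall k, F (2 * k)%N = 0.
  by move=> k; rewrite /F exprNn !exprM m1sq expr1n !mul1r subrr mulr0.
have Fb : forall i, (n.+1 < i)%N -> F i = 0.
  by move=> i Hi; rewrite /F /= bin_small // !mul0r.
rewrite (exprDn y (1/2)) exprDn -sumrB.
transitivity (\sum_(i < n.+2) F i).
  by apply: eq_bigr => i _; rewrite /F -mulrnBl -mulrBr -[_ *+ 'C(_, _)]mulr_natl mulrA.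
have oh := odd_double_half n; have o1 := leq_b1 (odd n).
rewrite -(@widen F n.+2 n.+3) //.
rewrite (@widen F (2 * (n./2).+1)%N n.+3); last 2 first.
- rewrite -mul2n in oh; lia.
- move=> i Hi; case: (ltnP n.+1 i) => Hi2; first exact: Fb.
  have -> : i = (2 * (n./2).+1)%N by rewrite -mul2n in oh; lia.
  by rewrite Fe.
rewrite sum_pairs; apply: eq_bigr => k _; rewrite Fe add0r /F subSS.
have h4 : (1/2 : R) ^+ 2 = 4^-1 by field.
have e : (-1 : R) ^+ (2 * k).+1 = -1 by rewrite exprS exprM m1sq expr1n mulr1.
have f : (1/2 : R) ^+ (2 * k).+1 = 1/2 * (4 ^+ k)^-1 by rewrite exprS exprM h4 exprVn.
rewrite exprNn e f.
move: (('C(_, _))%:R : R) (y ^+ _) ((4 : R) ^+ k)^-1 => c u q.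
by field.
Qed.

Lemma a_rec n m : a n.+1 m.+1 =
  \sum_(k < (n./2).+1) ((4 : R) ^+ k)^-1 * ('C(n.+1, (2 * k).+1))%:R * a (n - 2 * k)%N m.
Proof.
rewrite /a D_step (@D_ext _ _ (fun y => \sum_(k < (n./2).+1)
   (fun k : nat => ((4 : R) ^+ k)^-1 * ('C(n.+1, (2 * k).+1))%:R) k *
   (fun (k : nat) (y : R) => y ^+ (n - 2 * k)) k y)).
  exact: (D_lin m (n./2).+1 (fun k : nat => ((4 : R) ^+ k)^-1 * ('C(n.+1, (2 * k).+1))%:R)
     (fun (k : nat) (y : R) => y ^+ (n - 2 * k))).
by move=> y; rewrite diffpow.
Qed.

Lemma a0 m : a 0 m.+1 = 0.
Proof.
rewrite /a D_step (@D_ext _ _ (fun _ => 0)); last by move=> y; rewrite !expr0 subrr.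
by rewrite /D big1 // => j _; rewrite mulr0.
Qed.

Lemma a_van m p : (p < m)%N -> a p m = 0.
Proof.
elim: m p => [|m IH] [|n] //= Hp; first exact: a0.
rewrite a_rec big1 // => k _; rewrite IH ?mulr0 //.
by apply: leq_ltn_trans (leq_subr _ _) _.
Qed.

Lemma cfub_a p x : cfub R p x = \sum_(k < p.+1) a p k * x ^+ k.
Proof.
rewrite /cfub; apply: eq_bigr => k _; rewrite /cfT mulrA mulfV ?mul1r //.
by rewrite pnatr_eq0 -lt0n fact_gt0.
Qed.

End S.

Theorem theorem11 (R : realFieldType) (n : nat) (x : R) :
  cfub R n.+1 x =
  x * \sum_(k < (n./2).+1)
        ((4 : R) ^+ k)^-1 * ('C(n.+1, (2 * k).+1))%:R * cfub R (n - 2 * k)%N x.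
Proof.
rewrite cfub_a big_ord_recl.
have -> : a R n.+1 0 = 0.
  by rewrite /a /D big_ord1 expr0 bin0 mul1r mul0r subr0 expr0n mul1r.
rewrite mul0r add0r.
transitivity (x * \sum_(i < n.+1) \sum_(k < (n./2).+1)
   ((4 : R) ^+ k)^-1 * ('C(n.+1, (2 * k).+1))%:R * (a R (n - 2 * k)%N i * x ^+ i)).
  rewrite mulr_sumr; apply: eq_bigr => i _.
  rewrite /bump /= ?add1n a_rec exprS mulr_suml mulr_sumr; apply: eq_bigr => k _; ring.
rewrite exchange_big /=; congr (x * _); apply: eq_bigr => k _.
rewrite cfub_a mulr_sumr.
rewrite (@widen R (fun i : nat => ((4 : R) ^+ k)^-1 * ('C(n.+1, (2 * k).+1))%:R *
   (a R (n - 2 * k)%N i * x ^+ i)) (n - 2 * k).+1 n.+1).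
- by [].
- by rewrite ltnS leq_subr.
- by move=> i Hi; rewrite a_van ?mul0r ?mulr0.
Qed.
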